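(* Let $(\lambda_0,\dots,\lambda_n)\in\mathbb{C}^{n+1}$ and assume $E_{(\lambda_0,\dots,\lambda_n)}$ is closed under complex conjugation. Let $M_n:=\max\{|\mathrm{Im}\,\lambda_j|: j=0,\dots,n\}$. Then for all real $a<b$ with $b-a<\pi/M_n$ (interpreted as no restriction when $M_n=0$), $E_{(\lambda_0,\dots,\lambda_n)}$ is an extended Chebyshev system over the interval $[a,b]$.
   Context: $E_{(\lambda_0,\dots,\lambda_n)}$ denotes the space of all $f\in C^\infty(\mathbb{R},\mathbb{C})$ with $(\frac{d}{dx}-\lambda_0)\cdots(\frac{d}{dx}-\lambda_n)f=0$ (dimension $n+1$). A zero of order $k$ at $a$ means $f(a)=\dots=f^{(k-1)}(a)=0$, $f^{(k)}(a)\ne0$. $E_{(\lambda_0,\dots,\lambda_n)}$ is an extended Chebyshev system over a set $A\subset\mathbb{R}$ if every nonzero element has at most $n$ zeros in $A$ counted with multiplicity. Closed under complex conjugation means $\overline f\in E_{(\lambda_0,\dots,\lambda_n)}$ whenever $f\in E_{(\lambda_0,\dots,\lambda_n)}$. *)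

(* Defs.v *)
From Stdlib Require Import Reals Lra List.
Open Scope R_scope.

Definition Cpx : Type := (R * R)%type.
Definition Re (z : Cpx) : R := fst z.
Definition Im (z : Cpx) : R := snd z.
Definition C0 : Cpx := (0, 0).
Definition Cadd (z w : Cpx) : Cpx := (fst z + fst w, snd z + snd w).
Definition Csub (z w : Cpx) : Cpx := (fst z - fst w, snd z - snd w).
Definition Cmul (z w : Cpx) : Cpx :=
  (fst z * fst w - snd z * snd w, fst z * snd w + snd z * fst w).
Definition Cconj (z : Cpx) : Cpx := (fst z, - snd z).

Definition IsDeriv (f g : R -> Cpx) : Prop :=
  forall x, derivable_pt_lim (fun t => fst (f t)) x (fst (g x)) /\
            derivable_pt_lim (fun t => snd (f t)) x (snd (g x)).

Definition IsDerivSeq (f : R -> Cpx) (D : nat -> R -> Cpx) : Prop :=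
  (forall x, D 0%nat x = f x) /\ (forall k, IsDeriv (D k) (D (S k))).

Definition Smooth (f : R -> Cpx) : Prop := exists D, IsDerivSeq f D.

(* OpKer lam k f : (d/dx - lam 0) ... (d/dx - lam (k-1)) f = 0,
   the innermost factor (d/dx - lam (k-1)) being applied first *)
Fixpoint OpKer (lam : nat -> Cpx) (k : nat) (f : R -> Cpx) : Prop :=
  match k with
  | O => forall x, f x = C0
  | S k' => exists g, IsDeriv f g /\
             OpKer lam k' (fun x => Csub (g x) (Cmul (lam k') (f x)))
  end.

Definition InE (lam : nat -> Cpx) (n : nat) (f : R -> Cpx) : Prop :=
  Smooth f /\ OpKer lam (S n) f.

Definition ConjClosed (lam : nat -> Cpx) (n : nat) : Prop :=
  forall f, InE lam n f -> InE lam n (fun x => Cconj (f x)).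

Definition ZeroOfOrder (f : R -> Cpx) (a : R) (k : nat) : Prop :=
  exists D, IsDerivSeq f D /\
    (forall j, (j < k)%nat -> D j a = C0) /\ D k a <> C0.

Definition ExtChebyshevOn (lam : nat -> Cpx) (n : nat) (a b : R) : Prop :=
  forall f, InE lam n f -> (exists x, f x <> C0) ->
  forall zs : list (R * nat),
    NoDup (map fst zs) ->
    (forall z, In z zs -> a <= fst z <= b /\ (1 <= snd z)%nat /\
                          ZeroOfOrder f (fst z) (snd z)) ->
    (fold_right (fun z acc => snd z + acc) 0 zs <= n)%nat.

Fixpoint MaxAbsIm (lam : nat -> Cpx) (n : nat) : R :=
  match n with
  | O => Rabs (Im (lam 0%nat))
  | S m => Rmax (MaxAbsIm lam m) (Rabs (Im (lam (S m))))
  end.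

(* Main.v *)
Require Import Defs.
From Stdlib Require Import Reals Lra Lia List Permutation FunctionalExtensionality Arith Factorial.
Open Scope R_scope.

Lemma dl_eq f x l l' : derivable_pt_lim f x l -> l = l' -> derivable_pt_lim f x l'.
Proof. intros H ->; exact H. Qed.
Lemma dl_plus f g x a b : derivable_pt_lim f x a -> derivable_pt_lim g x b ->
  derivable_pt_lim (fun t => f t + g t) x (a + b).
Proof. intros; apply (derivable_pt_lim_plus f g); auto. Qed.
Lemma dl_minus f g x a b : derivable_pt_lim f x a -> derivable_pt_lim g x b ->
  derivable_pt_lim (fun t => f t - g t) x (a - b).
Proof. intros; apply (derivable_pt_lim_minus f g); auto. Qed.
Lemma dl_mult f g x a b : derivable_pt_lim f x a -> derivable_pt_lim g x b ->
  derivable_pt_lim (fun t => f t * g t) x (a * g x + f x * b).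
Proof. intros; apply (derivable_pt_lim_mult f g); auto. Qed.
Lemma dl_scal c f x a : derivable_pt_lim f x a ->
  derivable_pt_lim (fun t => c * f t) x (c * a).
Proof. intros; apply (derivable_pt_lim_scal f c); auto. Qed.
Lemma dl_const c x : derivable_pt_lim (fun _ => c) x 0.
Proof. apply (derivable_pt_lim_const c). Qed.
Lemma dl_id x : derivable_pt_lim (fun t => t) x 1.
Proof. apply derivable_pt_lim_id. Qed.
Lemma dl_lin p c x : derivable_pt_lim (fun t => p * t + c) x p.
Proof. apply (dl_eq _ _ (p*1 + 0)); [apply dl_plus; [apply dl_scal; apply dl_id|apply dl_const]|ring]. Qed.
Lemma dl_exp_lin p x : derivable_pt_lim (fun t => exp (p * t)) x (p * exp (p * x)).
Proof.
  apply (dl_eq _ _ (exp (p*x) * (p*1))).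
  - apply (derivable_pt_lim_comp (fun t => p*t) exp x (p*1) (exp (p*x))).
    apply dl_scal, dl_id. apply derivable_pt_lim_exp.
  - ring.
Qed.
Lemma dl_sin_lin q c x : derivable_pt_lim (fun t => sin (q * t + c)) x (q * cos (q * x + c)).
Proof.
  apply (dl_eq _ _ (cos (q*x+c) * q)).
  - apply (derivable_pt_lim_comp (fun t => q*t+c) sin x q). apply dl_lin. apply derivable_pt_lim_sin.
  - ring.
Qed.
Lemma dl_cos_lin q c x : derivable_pt_lim (fun t => cos (q * t + c)) x (- q * sin (q * x + c)).
Proof.
  apply (dl_eq _ _ (- sin (q*x+c) * q)).
  - apply (derivable_pt_lim_comp (fun t => q*t+c) cos x q). apply dl_lin. apply derivable_pt_lim_cos.
  - ring.
Qed.
Lemma dl_div f g x a b : derivable_pt_lim f x a -> derivable_pt_lim g x b -> g x <> 0 ->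
  derivable_pt_lim (fun t => f t / g t) x ((a * g x - b * f x) / (g x)²).
Proof. intros; apply (derivable_pt_lim_div f g); auto. Qed.

Definition deriv (f g : R -> R) : Prop := forall x, derivable_pt_lim f x (g x).

Lemma deriv_unique f g1 g2 : deriv f g1 -> deriv f g2 -> g1 = g2.
Proof. intros H1 H2; extensionality x; eapply uniqueness_limite; eauto. Qed.

Lemma rolle f f' x y : x < y -> (forall t, x <= t <= y -> derivable_pt_lim f t (f' t)) ->
  f x = f y -> exists c, x < c < y /\ f' c = 0.
Proof.
  intros Hxy Hd He. destruct (MVT_cor2 f f' x y Hxy Hd) as [c [Hc1 Hc2]].
  exists c; split; auto. rewrite He in Hc1. replace (f y - f y) with 0 in Hc1 by ring.
  symmetry in Hc1. apply Rmult_integral in Hc1. destruct Hc1; auto; lra.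
Qed.
Lemma const_of_deriv0 f f' : deriv f f' -> (forall t, f' t = 0) -> forall x y, f x = f y.
Proof.
  intros Hd H0 x y. destruct (Rtotal_order x y) as [H|[H|H]].
  - destruct (MVT_cor2 f f' x y H) as [c [Hc _]]. intros; apply Hd. rewrite H0 in Hc. lra.
  - subst; auto.
  - destruct (MVT_cor2 f f' y x H) as [c [Hc _]]. intros; apply Hd. rewrite H0 in Hc. lra.
Qed.

Fixpoint SmK (k : nat) (g : R -> R) : Prop :=
  match k with O => True | S k' => exists g', deriv g g' /\ SmK k' g' end.
Definition Sm g := forall k, SmK k g.

Fixpoint Z (k : nat) (g : R -> R) (z : R) : Prop :=
  match k with O => True | S k' => g z = 0 /\ exists g', deriv g g' /\ Z k' g' z end.

Lemma SmK_mono k g : SmK (S k) g -> SmK k g.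
Proof. revert g; induction k; simpl; intros g [g' [Hd Hs]]; auto. exists g'; split; auto. Qed.
Lemma Z_mono k g z : Z (S k) g z -> Z k g z.
Proof. revert g; induction k; simpl; intros g [H0 [g' [Hd Hs]]]; auto. split; auto. exists g'; split; auto. Qed.
Lemma Z_le k j g z : (j <= k)%nat -> Z k g z -> Z j g z.
Proof. induction 1; auto. intros; apply IHle, Z_mono; auto. Qed.

Lemma deriv_lin c1 c2 f g f' g' : deriv f f' -> deriv g g' ->
  deriv (fun t => c1 * f t + c2 * g t) (fun t => c1 * f' t + c2 * g' t).
Proof. intros H1 H2 x. apply dl_plus; apply dl_scal; auto. Qed.
Lemma deriv_mul f g f' g' : deriv f f' -> deriv g g' ->
  deriv (fun t => f t * g t) (fun t => f' t * g t + f t * g' t).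
Proof. intros H1 H2 x. apply dl_mult; auto. Qed.

Lemma SmK_lin k c1 c2 f g : SmK k f -> SmK k g -> SmK k (fun t => c1 * f t + c2 * g t).
Proof.
  revert f g; induction k; simpl; auto. intros f g [f' [Hf Sf]] [g' [Hg Sg]].
  exists (fun t => c1 * f' t + c2 * g' t); split; auto. apply deriv_lin; auto.
Qed.
Lemma Z_lin k c1 c2 f g z : Z k f z -> Z k g z -> Z k (fun t => c1 * f t + c2 * g t) z.
Proof.
  revert f g; induction k; simpl; auto. intros f g [f0 [f' [Hf Sf]]] [g0 [g' [Hg Sg]]].
  split. rewrite f0, g0; ring.
  exists (fun t => c1 * f' t + c2 * g' t); split; auto. apply deriv_lin; auto.
Qed.
Lemma Z_ext k f g z : (forall t, f t = g t) -> Z k f z -> Z k g z.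
Proof. intros H; replace g with f; auto. extensionality t; auto. Qed.
Lemma SmK_ext k f g : (forall t, f t = g t) -> SmK k f -> SmK k g.
Proof. intros H; replace g with f; auto. extensionality t; auto. Qed.

Lemma Z_mul k phi g z : SmK k phi -> Z k g z -> Z k (fun t => phi t * g t) z.
Proof.
  revert phi g; induction k; simpl; auto. intros phi g [p' [Hp Sp]] [g0 [g' [Hg Zg]]].
  split. rewrite g0; ring.
  exists (fun t => p' t * g t + phi t * g' t); split. apply deriv_mul; auto.
  apply (Z_ext _ (fun t => 1 * (p' t * g t) + 1 * (phi t * g' t))). intros; ring.
  apply Z_lin. apply IHk; auto. apply Z_mono. simpl. split; auto. exists g'; auto.
  apply IHk; auto. apply SmK_mono. simpl. exists p'; auto.
Qed.

Lemma Sm_deriv phi phi' : Sm phi -> deriv phi phi' -> Sm phi'.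
Proof.
  intros H Hd k. destruct (H (S k)) as [p [Hp Sp]].
  rewrite (deriv_unique _ _ _ Hd Hp); auto.
Qed.
Lemma Sm_has_deriv phi : Sm phi -> exists phi', deriv phi phi' /\ Sm phi'.
Proof.
  intros H. destruct (H 1%nat) as [p [Hp _]]. exists p; split; auto. eapply Sm_deriv; eauto.
Qed.

Lemma Z_cancel k phi g z : Sm phi -> phi z <> 0 -> SmK k g ->
  Z k (fun t => phi t * g t) z -> Z k g z.
Proof.
  revert phi g; induction k; simpl; auto. intros phi g Sp Hnz [g' [Hg Sg]] [H0 [p [Hp Zp]]].
  split. apply Rmult_integral in H0; destruct H0; [contradiction|auto].
  exists g'; split; auto.
  destruct (Sm_has_deriv phi Sp) as [phi' [Hphi Sphi']].
  assert (Ep : p = fun t => phi' t * g t + phi t * g' t).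
  { apply (deriv_unique (fun t => phi t * g t)); auto. apply deriv_mul; auto. }
  subst p.
  apply (IHk phi); auto.
  apply (Z_ext _ (fun t => 1 * (phi' t * g t + phi t * g' t) + (-1) * (phi' t * g t))). intros; ring.
  apply Z_lin; auto. apply Z_mul. apply Sphi'.
  apply (IHk phi); auto. apply SmK_mono; simpl; exists g'; auto.
  apply Z_mono. simpl. split; auto. exists (fun t => phi' t * g t + phi t * g' t); auto.
Qed.

Lemma Z_of_seq (G : nat -> R -> R) k z : (forall j, deriv (G j) (G (S j))) ->
  (forall j, (j < k)%nat -> G j z = 0) -> Z k (G O) z.
Proof.
  revert G; induction k; simpl; auto. intros G Hd Hz. split. apply Hz; lia.
  exists (G 1%nat); split; auto. apply (IHk (fun j => G (S j))); auto. intros; apply Hz; lia.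
Qed.
Lemma Sm_of_seq (G : nat -> R -> R) : (forall j, deriv (G j) (G (S j))) -> Sm (G O).
Proof.
  intros Hd k; revert G Hd; induction k; simpl; auto. intros G Hd.
  exists (G 1%nat); split; auto. apply (IHk (fun j => G (S j))); auto.
Qed.
Lemma Z_step k g g' z : deriv g g' -> Z (S k) g z -> Z k g' z.
Proof. intros Hd [_ [p [Hp Zp]]]. rewrite (deriv_unique _ _ _ Hd Hp); auto. Qed.

Definition sumk (l : list (R * nat)) : nat := fold_right (fun z acc => (snd z + acc)%nat) 0%nat l.
Fixpoint Srt (l : list (R * nat)) : Prop :=
  match l with nil => True | p :: l' => (forall q, In q l' -> fst p < fst q) /\ Srt l' end.
Definition Good (a b : R) (h : R -> R) (l : list (R * nat)) : Prop :=
  forall p, In p l -> a <= fst p <= b /\ (1 <= snd p)%nat /\ Z (snd p) h (fst p).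

Lemma sumk_cons p l : sumk (p :: l) = (snd p + sumk l)%nat.
Proof. reflexivity. Qed.
Lemma sumk_app l1 l2 : sumk (l1 ++ l2) = (sumk l1 + sumk l2)%nat.
Proof. induction l1 as [|p l1 IH]; [reflexivity|]. rewrite <- app_comm_cons, !sumk_cons, IH; lia. Qed.

Lemma Srt_app l1 l2 : Srt l1 -> Srt l2 -> (forall p q, In p l1 -> In q l2 -> fst p < fst q) -> Srt (l1 ++ l2).
Proof.
  induction l1 as [|p l1 IH]; simpl; auto. intros [H1 H2] H3 H4. split.
  - intros q Hq. apply in_app_or in Hq; destruct Hq; auto.
  - apply IH; auto.
Qed.

Lemma abs_rolle a b h V :
  (exists V', deriv V V') ->
  (forall z k, a <= z <= b -> (1 <= k)%nat -> Z k h z -> Z (k-1) V z) ->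
  (forall x y, a <= x -> x < y -> y <= b -> h x = 0 -> h y = 0 -> exists c, x < c < y /\ V c = 0) ->
  forall l, Srt l -> Good a b h l -> exists l', Srt l' /\ Good a b V l' /\
     (sumk l <= sumk l' + 1)%nat /\ (forall q, In q l' -> exists p, In p l /\ fst p <= fst q).
Proof.
  intros [V' HV] Hi Hii l. induction l as [|[z k] l1 IH]; intros Hs Hg.
  - exists nil; split; [exact I|split;[intros ? []|split;[simpl; lia|intros ? []]]].
  - destruct Hs as [Hs1 Hs2].
    assert (Hg1 : Good a b h l1) by (intros p Hp; apply Hg; simpl; auto).
    destruct (IH Hs2 Hg1) as [l1' [S1 [G1 [Sum1 Inv1]]]].
    destruct (Hg (z,k) (or_introl eq_refl)) as [Hzab [Hk Hzk]]; simpl in Hzab, Hk, Hzk.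
    set (pre := if Nat.eqb k 1 then nil else (z, (k-1)%nat) :: nil).
    assert (Hpre : Srt pre /\ Good a b V pre /\ sumk pre = (k-1)%nat /\ forall q, In q pre -> fst q = z).
    { unfold pre; destruct (Nat.eqb_spec k 1).
      - split; [exact I|split;[intros ? []|split;[simpl; lia|intros ? []]]].
      - split; [simpl; split; auto; intros ? []|split;[|split;[simpl; lia|]]].
        + intros p [<-|[]]; simpl. split; [lra|split;[lia|]]. apply Hi; auto.
        + intros q [<-|[]]; auto. }
    destruct Hpre as [Sp [Gp [Sump Invp]]].
    destruct l1 as [|[z2 k2] l2].
    + exists pre. split; auto. split; auto. split. simpl. lia.
      intros q Hq. exists (z,k); split; simpl; auto. rewrite (Invp q Hq); lra.
    + destruct (Hg (z2,k2) (or_intror (or_introl eq_refl))) as [Hz2ab [Hk2 Hz2k]]; simpl in *.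
      assert (Hzz2 : z < z2) by (apply (Hs1 (z2,k2)); auto).
      destruct (Hii z z2) as [c [Hc HVc]]; try lra.
      { destruct k; [lia|]; destruct Hzk; auto. }
      { destruct k2; [lia|]; destruct Hz2k; auto. }
      assert (Hbig : forall q, In q l1' -> z2 <= fst q).
      { intros q Hq. destruct (Inv1 q Hq) as [p [[<-|Hp] Hpq]]; simpl in *; auto.
        destruct Hs2 as [Hs2 _]. specialize (Hs2 p Hp). lra. }
      exists (pre ++ (c,1%nat) :: l1'). split; [|split; [|split]].
      * apply Srt_app; auto. simpl; split; auto. intros q Hq; specialize (Hbig q Hq); simpl; lra.
        intros p0 q Hp Hq. rewrite (Invp p0 Hp). destruct Hq as [<-|Hq]; simpl. lra.
        specialize (Hbig q Hq); lra.
      * intros p0 Hp. apply in_app_or in Hp; destruct Hp as [Hp|[<-|Hp]]; auto.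
        simpl. split; [lra|split;[lia|]]. split; auto. exists V'; split; auto.
        
      * rewrite sumk_app, sumk_cons. simpl. lia.
      * intros q Hq. apply in_app_or in Hq; destruct Hq as [Hq|[<-|Hq]].
        exists (z,k); split; simpl; auto. rewrite (Invp q Hq); lra.
        exists (z,k); split; simpl; auto; lra.
        destruct (Inv1 q Hq) as [p0 [Hp Hpq]]. exists p0; split; simpl; auto.
Qed.

Lemma Cpx_eq (z w : Cpx) : fst z = fst w -> snd z = snd w -> z = w.
Proof. destruct z, w; simpl; intros -> ->; auto. Qed.

Ltac cring := apply Cpx_eq; simpl; ring.

Lemma IsDeriv_unique f g1 g2 : IsDeriv f g1 -> IsDeriv f g2 -> g1 = g2.
Proof.
  intros H1 H2; extensionality x. destruct (H1 x) as [a1 b1]; destruct (H2 x) as [a2 b2].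
  apply Cpx_eq; eapply uniqueness_limite; eauto.
Qed.
Lemma IsDeriv_add f g f' g' : IsDeriv f f' -> IsDeriv g g' ->
  IsDeriv (fun x => Cadd (f x) (g x)) (fun x => Cadd (f' x) (g' x)).
Proof. intros H1 H2 x; destruct (H1 x), (H2 x); simpl; split; apply dl_plus; auto. Qed.
Lemma IsDeriv_sub f g f' g' : IsDeriv f f' -> IsDeriv g g' ->
  IsDeriv (fun x => Csub (f x) (g x)) (fun x => Csub (f' x) (g' x)).
Proof. intros H1 H2 x; destruct (H1 x), (H2 x); simpl; split; apply dl_minus; auto. Qed.
Lemma IsDeriv_cmul c f f' : IsDeriv f f' ->
  IsDeriv (fun x => Cmul c (f x)) (fun x => Cmul c (f' x)).
Proof.
  intros H1 x; destruct (H1 x); simpl; split.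
  apply dl_minus; apply dl_scal; auto. apply dl_plus; apply dl_scal; auto.
Qed.
Lemma IsDeriv_conj f f' : IsDeriv f f' -> IsDeriv (fun x => Cconj (f x)) (fun x => Cconj (f' x)).
Proof.
  intros H1 x; destruct (H1 x); simpl; split; auto.
  apply (derivable_pt_lim_opp (fun t => snd (f t))); auto.
Qed.

Definition Seq (D : nat -> R -> Cpx) : Prop := forall k, IsDeriv (D k) (D (S k)).
Definition A (mu : Cpx) (D : nat -> R -> Cpx) : nat -> R -> Cpx :=
  fun j x => Csub (D (S j) x) (Cmul mu (D j x)).
Definition Comp (l : list Cpx) (D : nat -> R -> Cpx) : nat -> R -> Cpx :=
  fold_left (fun D mu => A mu D) l D.
Fixpoint lst (lam : nat -> Cpx) (k : nat) : list Cpx :=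
  match k with O => nil | S k' => lam k' :: lst lam k' end.

Lemma Comp_cons mu l D : Comp (mu :: l) D = Comp l (A mu D).
Proof. reflexivity. Qed.
Lemma Comp_app l1 l2 D : Comp (l1 ++ l2) D = Comp l2 (Comp l1 D).
Proof. unfold Comp; rewrite fold_left_app; auto. Qed.

Lemma A_comm x y D : A x (A y D) = A y (A x D).
Proof. extensionality j; extensionality t; unfold A. cring. Qed.

Lemma Comp_perm l l' : Permutation l l' -> forall D, Comp l D = Comp l' D.
Proof.
  induction 1; intros D; auto.
  - rewrite !Comp_cons; auto.
  - rewrite !Comp_cons, A_comm; auto.
  - rewrite IHPermutation1; auto.
Qed.

Lemma Seq_A mu D : Seq D -> Seq (A mu D).
Proof. intros H k. unfold A. apply IsDeriv_sub; auto. apply IsDeriv_cmul; auto. Qed.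
Lemma Seq_Comp l D : Seq D -> Seq (Comp l D).
Proof. revert D; induction l; intros D H; auto. rewrite Comp_cons; apply IHl, Seq_A; auto. Qed.

Definition Lin c1 (D1 : nat -> R -> Cpx) c2 D2 : nat -> R -> Cpx :=
  fun j x => Cadd (Cmul c1 (D1 j x)) (Cmul c2 (D2 j x)).
Lemma Comp_Lin l c1 D1 c2 D2 : Comp l (Lin c1 D1 c2 D2) = Lin c1 (Comp l D1) c2 (Comp l D2).
Proof.
  revert D1 D2; induction l; intros D1 D2; auto. rewrite !Comp_cons, <- IHl. f_equal.
  extensionality j; extensionality t; unfold A, Lin. cring.
Qed.
Definition Zero : nat -> R -> Cpx := fun _ _ => C0.
Lemma Comp_Zero l : Comp l Zero = Zero.
Proof.
  induction l; auto. rewrite Comp_cons. replace (A a Zero) with Zero; auto.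
  extensionality j; extensionality t; unfold A, Zero, C0. cring.
Qed.

Lemma seq_unique f D1 D2 : IsDerivSeq f D1 -> IsDerivSeq f D2 -> D1 = D2.
Proof.
  intros [H1 H2] [G1 G2]. extensionality j. induction j.
  - extensionality x; rewrite H1, G1; auto.
  - apply (IsDeriv_unique (D1 j)); auto. rewrite IHj; auto.
Qed.

Lemma opker_to lam k : forall f D, IsDerivSeq f D -> OpKer lam k f -> forall x, Comp (lst lam k) D O x = C0.
Proof.
  induction k; intros f D [HD0 HD] Hk x; cbn [lst OpKer] in *.
  - rewrite HD0; auto.
  - destruct Hk as [g [Hg Hk]]. rewrite Comp_cons.
    assert (Ef : f = D O) by (extensionality t; auto).
    subst f. assert (g = D 1%nat) by (eapply IsDeriv_unique; eauto). subst g.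
    apply (IHk (fun t => Csub (D 1%nat t) (Cmul (lam k) (D O t))) (A (lam k) D)); auto. split; auto. apply Seq_A; exact HD.
Qed.

Lemma opker_ext lam k f g : (forall x, f x = g x) -> OpKer lam k f -> OpKer lam k g.
Proof. intros H; replace g with f; auto; extensionality x; auto. Qed.

Lemma to_opker lam k : forall f D, IsDerivSeq f D -> (forall x, Comp (lst lam k) D O x = C0) -> OpKer lam k f.
Proof.
  induction k; intros f D [HD0 HD] Hk; cbn [lst OpKer] in *.
  - intros x; rewrite <- HD0; auto.
  - assert (Ef : f = D O) by (extensionality t; auto). subst f.
    exists (D 1%nat); split; auto.
    apply (IHk (fun t => Csub (D 1%nat t) (Cmul (lam k) (D O t))) (A (lam k) D)); auto. split; auto. apply Seq_A; exact HD.
Qed.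

Lemma Cmul_integral a b : Cmul a b = C0 -> a = C0 \/ b = C0.
Proof.
  destruct a as [a1 a2], b as [b1 b2]; unfold Cmul, C0; simpl; intros H; injection H; intros H2 H1.
  assert (Hn : (a1*a1 + a2*a2) * (b1*b1+b2*b2) = 0).
  { replace ((a1*a1 + a2*a2) * (b1*b1+b2*b2)) with ((a1*b1 - a2*b2)^2 + (a1*b2+a2*b1)^2) by ring.
    rewrite H1, H2; ring. }
  apply Rmult_integral in Hn; destruct Hn as [Hn|Hn]; [left|right];
  apply Cpx_eq; simpl; nra.
Qed.

Definition Ceq_dec (x y : Cpx) : {x = y} + {x <> y}.
Proof.
  destruct x as [a b], y as [c d]. destruct (Req_EM_T a c) as [H1|H1], (Req_EM_T b d) as [H2|H2].
  - left; subst; auto.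
  - right; intro H; injection H; auto.
  - right; intro H; injection H; auto.
  - right; intro H; injection H; auto.
Defined.
Definition cnt (l : list Cpx) (nu : Cpx) : nat := count_occ Ceq_dec l nu.

Lemma perm_count l nu : exists rest, Permutation l (repeat nu (cnt l nu) ++ rest) /\ ~ In nu rest.
Proof.
  induction l as [|a l [rest [Hp Hn]]].
  - exists nil; simpl; split; auto.
  - unfold cnt; simpl. destruct (Ceq_dec a nu) as [->|Hne].
    + exists rest; split; auto. simpl; apply perm_skip; auto.
    + exists (a :: rest); split.
      * apply Permutation_cons_app; auto.
      * intros [H|H]; auto.
Qed.

Definition Ex (nu : Cpx) (x : R) : Cpx :=
  (exp (fst nu * x) * cos (snd nu * x + 0), exp (fst nu * x) * sin (snd nu * x + 0)).
Definition Crs (r : R) (z : Cpx) : Cpx := (r * fst z, r * snd z).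
Definition psi (nu : Cpx) (k : nat) (x : R) : Cpx := Crs (x ^ k / INR (fact k)) (Ex nu x).

Lemma IsDeriv_Ex nu : IsDeriv (Ex nu) (fun x => Cmul nu (Ex nu x)).
Proof.
  intros x; unfold Ex, Cmul; simpl; split.
  - eapply dl_eq. apply dl_mult. apply dl_exp_lin. apply dl_cos_lin. cbv beta; ring.
  - eapply dl_eq. apply dl_mult. apply dl_exp_lin. apply dl_sin_lin. cbv beta; ring.
Qed.
Lemma IsDeriv_Crs p p' F F' : deriv p p' -> IsDeriv F F' ->
  IsDeriv (fun x => Crs (p x) (F x)) (fun x => Cadd (Crs (p' x) (F x)) (Crs (p x) (F' x))).
Proof.
  intros Hp HF x; destruct (HF x); unfold Crs; simpl; split;
  apply dl_mult; auto.
Qed.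

Lemma deriv_powfact k : deriv (fun x => x ^ S k / INR (fact (S k))) (fun x => x ^ k / INR (fact k)).
Proof.
  intros x. eapply dl_eq. apply derivable_pt_lim_div_scal. apply derivable_pt_lim_pow.
  simpl pred. rewrite fact_simpl, mult_INR. field. split. apply INR_fact_neq_0.
  apply not_0_INR; lia.
Qed.

Lemma IsDeriv_ext f g g2 : IsDeriv f g -> (forall x, g x = g2 x) -> IsDeriv f g2.
Proof. intros H E; replace g2 with g; auto; extensionality x; auto. Qed.

Lemma psi_deriv0 nu : IsDeriv (psi nu 0) (fun x => Cmul nu (psi nu 0 x)).
Proof.
  unfold psi. eapply IsDeriv_ext.
  apply (IsDeriv_Crs (fun x => x ^ 0 / INR (fact 0)) (fun _ => 0)). intros x; simpl.
  eapply dl_eq. apply dl_const. auto. apply IsDeriv_Ex.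
  intros x; unfold Crs, Cmul; simpl. apply Cpx_eq; simpl; ring.
Qed.
Lemma psi_derivS nu k : IsDeriv (psi nu (S k)) (fun x => Cadd (psi nu k x) (Cmul nu (psi nu (S k) x))).
Proof.
  unfold psi. eapply IsDeriv_ext.
  apply IsDeriv_Crs. apply deriv_powfact. apply IsDeriv_Ex.
  intros x; unfold Crs, Cmul; simpl. apply Cpx_eq; simpl; ring.
Qed.

Fixpoint Sq (nu : Cpx) (j : nat) : nat -> R -> Cpx :=
  match j with
  | O => fun k => psi nu k
  | S j' => fun k x => match k with
                       | O => Cmul nu (Sq nu j' O x)
                       | S k' => Cadd (Sq nu j' k' x) (Cmul nu (Sq nu j' k x))
                       end
  end.
Definition SqS nu k : nat -> R -> Cpx := fun j => Sq nu j k.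

Lemma Sq_seq nu k : Seq (SqS nu k).
Proof.
  intros j; revert k; unfold SqS; induction j; intros k.
  - destruct k; simpl. apply psi_deriv0. apply psi_derivS.
  - destruct k; simpl.
    + apply IsDeriv_cmul; auto.
    + apply IsDeriv_add; auto. apply IsDeriv_cmul; auto.
Qed.

Lemma A_SqS nu k : A nu (SqS nu (S k)) = SqS nu k.
Proof. extensionality j; extensionality x; unfold A, SqS; simpl. cring. Qed.
Lemma A_SqS0 nu : A nu (SqS nu 0) = Zero.
Proof. extensionality j; extensionality x; unfold A, SqS, Zero, C0; simpl. cring. Qed.

Lemma Comp_rep nu j i : Comp (repeat nu j) (SqS nu (j + i)) = SqS nu i.
Proof.
  revert i; induction j; intros i; auto. simpl repeat. rewrite Comp_cons.
  replace (S j + i)%nat with (S (j + i)) by lia. rewrite A_SqS; auto.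
Qed.
Lemma Comp_rep_zero nu k m : (k < m)%nat -> Comp (repeat nu m) (SqS nu k) = Zero.
Proof.
  intros H. replace m with (k + 1 + (m - k - 1))%nat by lia.
  rewrite repeat_app, Comp_app, repeat_app, Comp_app.
  replace (SqS nu k) with (SqS nu (k + 0)) by (f_equal; lia). rewrite Comp_rep.
  simpl repeat. rewrite Comp_cons, A_SqS0, !Comp_Zero; auto.
Qed.

Definition Sc c (D : nat -> R -> Cpx) : nat -> R -> Cpx := fun j x => Cmul c (D j x).
Lemma Comp_eig nu r : (forall rho, In rho r -> rho <> nu) -> forall c, c <> C0 ->
  exists c', c' <> C0 /\ Comp r (Sc c (SqS nu 0)) = Sc c' (SqS nu 0).
Proof.
  induction r as [|rho r IH]; intros Hr c Hc.
  - exists c; auto.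
  - rewrite Comp_cons.
    replace (A rho (Sc c (SqS nu 0))) with (Sc (Cmul c (Csub nu rho)) (SqS nu 0)).
    + apply IH. intros; apply Hr; simpl; auto.
      intros H; apply Cmul_integral in H; destruct H as [H|H]; auto.
      apply (Hr rho); simpl; auto. destruct nu, rho; unfold Csub, C0 in H; simpl in H.
      injection H; intros; apply Cpx_eq; simpl; lra.
    + extensionality j; extensionality x; unfold A, Sc, SqS; simpl. cring.
Qed.

Lemma Sq_conj nu j : forall k x, Sq (Cconj nu) j k x = Cconj (Sq nu j k x).
Proof.
  induction j; intros k x; simpl.
  - unfold psi, Crs, Ex, Cconj; simpl. apply Cpx_eq; simpl.
    + replace (- snd nu * x + 0) with (- (snd nu * x + 0)) by ring. rewrite cos_neg; auto.
    + replace (- snd nu * x + 0) with (- (snd nu * x + 0)) by ring. rewrite sin_neg; ring.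
  - destruct k; rewrite ?IHj; destruct nu; unfold Cconj, Cmul, Cadd; simpl; apply Cpx_eq; simpl; ring.
Qed.

Lemma psi00 nu : Sq nu 0 0 0 = (1, 0).
Proof.
  simpl; unfold psi, Crs, Ex; simpl. rewrite !Rmult_0_r, Rplus_0_r, exp_0, cos_0, sin_0.
  apply Cpx_eq; simpl; field.
Qed.

Lemma conj_count lam n : ConjClosed lam n ->
  forall nu, (cnt (lst lam (S n)) nu <= cnt (lst lam (S n)) (Cconj nu))%nat.
Proof.
  intros HC nu. set (L := lst lam (S n)). set (m := cnt L nu). set (m' := cnt L (Cconj nu)).
  destruct (Nat.le_gt_cases m m') as [Hle|Hlt]; auto. exfalso.
  assert (Hin : InE lam n (psi nu m')).
  { split.
    - exists (SqS nu m'); split; [intros; reflexivity| apply Sq_seq].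
    - apply (to_opker lam (S n) _ (SqS nu m')). split; [intros; reflexivity| apply Sq_seq].
      intros x. destruct (perm_count L nu) as [rest [Hp _]]. fold L. rewrite (Comp_perm _ _ Hp).
      rewrite Comp_app. fold m. rewrite Comp_rep_zero; auto. rewrite Comp_Zero; auto. }
  destruct (HC _ Hin) as [_ Hop].
  assert (Hk := opker_to lam (S n) (fun x => Cconj (psi nu m' x)) (SqS (Cconj nu) m') ltac:(split; [intros x; change (Sq (Cconj nu) 0 m' x = Cconj (Sq nu 0 m' x)); apply Sq_conj|apply Sq_seq]) Hop 0).
  fold L in Hk.
  destruct (perm_count L (Cconj nu)) as [rest [Hp Hn]].
  rewrite (Comp_perm _ _ Hp), Comp_app in Hk. fold m' in Hk.
  replace (SqS (Cconj nu) m') with (SqS (Cconj nu) (m' + 0)) in Hk by (f_equal; lia).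
  rewrite Comp_rep in Hk.
  replace (SqS (Cconj nu) 0) with (Sc (1,0) (SqS (Cconj nu) 0)) in Hk.
  2:{ extensionality j; extensionality x; unfold Sc; cring. }
  destruct (Comp_eig (Cconj nu) rest) with (c := (1,0) : Cpx) as [c' [Hc' Heq]].
  { intros rho Hr E; subst; auto. }
  { unfold C0; intro H; injection H; lra. }
  rewrite Heq in Hk. unfold Sc, SqS in Hk. rewrite psi00 in Hk.
  apply Hc'. rewrite <- Hk. cring.
Qed.

Definition Cl (l : list Cpx) : Prop := forall nu, cnt l nu = cnt l (Cconj nu).
Definition Bnd (a b : R) (mu : Cpx) : Prop := snd mu = 0 \/ (b - a) * Rabs (snd mu) < PI.

Lemma Cconj_inv z : Cconj (Cconj z) = z.
Proof. destruct z; unfold Cconj; simpl; f_equal; ring. Qed.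
Lemma Cconj_eq_iff x y : x = y <-> Cconj x = Cconj y.
Proof. split; intros H. subst; auto. rewrite <- (Cconj_inv x), H, Cconj_inv; auto. Qed.

Lemma cnt_cons x l nu : cnt (x :: l) nu = ((if Ceq_dec x nu then 1 else 0) + cnt l nu)%nat.
Proof.
  unfold cnt; destruct (Ceq_dec x nu) as [e|e].
  rewrite count_occ_cons_eq; auto. rewrite count_occ_cons_neq; auto.
Qed.

Lemma Cl_tail1 x l : Cl (x :: l) -> Cconj x = x -> Cl l.
Proof.
  intros H Hx nu. specialize (H nu). rewrite !cnt_cons in H.
  destruct (Ceq_dec x nu) as [e1|e1], (Ceq_dec x (Cconj nu)) as [e2|e2]; try lia.
  - subst; congruence.
  - subst x; rewrite Cconj_inv in Hx; congruence.
Qed.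
Lemma Cl_tail2 x l : Cl (x :: Cconj x :: l) -> Cl l.
Proof.
  intros H nu. specialize (H nu). rewrite !cnt_cons in H.
  assert (E1 : x = nu <-> Cconj x = Cconj nu) by apply Cconj_eq_iff.
  assert (E2 : x = Cconj nu <-> Cconj x = nu).
  { rewrite Cconj_eq_iff, Cconj_inv; tauto. }
  destruct (Ceq_dec x nu), (Ceq_dec x (Cconj nu)), (Ceq_dec (Cconj x) nu), (Ceq_dec (Cconj x) (Cconj nu));
  try lia; tauto.
Qed.
Lemma Cl_perm l l' : Permutation l l' -> Cl l -> Cl l'.
Proof.
  intros Hp H nu. unfold cnt. rewrite <- !(proj1 (Permutation_count_occ Ceq_dec l l') Hp). apply H.
Qed.

Lemma Sm_ET_aux k : forall p q c, SmK k (fun x => exp (p * x) * sin (q * x + c)) /\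
                                 SmK k (fun x => exp (p * x) * cos (q * x + c)).
Proof.
  induction k; intros p q c; simpl; split; auto.
  - exists (fun x => p * (exp (p * x) * sin (q * x + c)) + q * (exp (p * x) * cos (q * x + c))).
    split. intros x. eapply dl_eq. apply dl_mult. apply dl_exp_lin. apply dl_sin_lin. cbv beta; ring.
    apply SmK_lin; apply IHk.
  - exists (fun x => p * (exp (p * x) * cos (q * x + c)) + (-q) * (exp (p * x) * sin (q * x + c))).
    split. intros x. eapply dl_eq. apply dl_mult. apply dl_exp_lin. apply dl_cos_lin. cbv beta; ring.
    apply SmK_lin; apply IHk.
Qed.
Lemma Sm_es p q c : Sm (fun x => exp (p * x) * sin (q * x + c)).
Proof. intros k; apply Sm_ET_aux. Qed.
Lemma Sm_ec p q c : Sm (fun x => exp (p * x) * cos (q * x + c)).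
Proof. intros k; apply Sm_ET_aux. Qed.

Definition es (al be c : R) (x : R) := exp ((- al) * x) * sin (be * x + c).
Definition ec (al be c : R) (x : R) := exp ((- al) * x) * cos (be * x + c).

Lemma d_es al be c : deriv (es al be c) (fun x => - al * es al be c x + be * ec al be c x).
Proof. intros x; unfold es, ec. eapply dl_eq. apply dl_mult. apply dl_exp_lin. apply dl_sin_lin. cbv beta; ring. Qed.
Lemma d_ec al be c : deriv (ec al be c) (fun x => - al * ec al be c x - be * es al be c x).
Proof. intros x; unfold es, ec. eapply dl_eq. apply dl_mult. apply dl_exp_lin. apply dl_cos_lin. cbv beta; ring. Qed.

Definition Vf al be c (g0 g1 : R -> R) x :=
  es al be c x * g1 x + (- al * es al be c x - be * ec al be c x) * g0 x.
Definition V2f al be c (g0 g1 : R -> R) x :=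
  ec al be c x * g1 x + (- al * ec al be c x + be * es al be c x) * g0 x.


Lemma d_Vf (al be c : R) (g0 g1 g2 L : R -> R) (Hd0 : deriv g0 g1) (Hd1 : deriv g1 g2) (HL : forall x, L x = g2 x - 2 * al * g1 x + (al * al + be * be) * g0 x) : deriv (Vf al be c g0 g1) (fun x => es al be c x * L x).
Proof.
  intros x. unfold Vf. eapply dl_eq.
  apply dl_plus. apply dl_mult. apply d_es. apply Hd1.
  apply dl_mult. apply dl_minus. apply dl_scal. apply d_es. apply dl_scal. apply d_ec. apply Hd0.
  rewrite HL. cbv beta; ring.
Qed.
Lemma d_V2f (al be c : R) (g0 g1 g2 L : R -> R) (Hd0 : deriv g0 g1) (Hd1 : deriv g1 g2) (HL : forall x, L x = g2 x - 2 * al * g1 x + (al * al + be * be) * g0 x) : deriv (V2f al be c g0 g1) (fun x => ec al be c x * L x).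
Proof.
  intros x. unfold V2f. eapply dl_eq.
  apply dl_plus. apply dl_mult. apply d_ec. apply Hd1.
  apply dl_mult. apply dl_plus. apply dl_scal. apply d_ec. apply dl_scal. apply d_es. apply Hd0.
  rewrite HL. cbv beta; ring.
Qed.

Lemma es_pos (al be c a b : R) (Hsin : forall x, a <= x <= b -> 0 < sin (be * x + c)) x : a <= x <= b -> 0 < es al be c x.
Proof. intros; unfold es; apply Rmult_lt_0_compat; [apply exp_pos|auto]. Qed.

Lemma pair_step1 (al be c a b : R) (g0 g1 g2 L : R -> R) (Hd0 : deriv g0 g1) (Hd1 : deriv g1 g2) (HL : forall x, L x = g2 x - 2 * al * g1 x + (al * al + be * be) * g0 x) (Hsin : forall x, a <= x <= b -> 0 < sin (be * x + c)) zs : Srt zs -> Good a b g0 zs -> exists l1, Srt l1 /\ Good a b (Vf al be c g0 g1) l1 /\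
   (sumk zs <= sumk l1 + 1)%nat.
Proof.
  intros Hs Hg. destruct (abs_rolle a b g0 (Vf al be c g0 g1)) with (l := zs) as [l1 [S1 [G1 [Sum1 _]]]]; auto.
  - exists (fun x => es al be c x * L x); apply (d_Vf al be c g0 g1 g2 L Hd0 Hd1 HL).
  - intros z k Hz Hk Hzk. destruct k as [|k]; [lia|]. simpl. rewrite Nat.sub_0_r.
    assert (Z1 : Z k g1 z) by (eapply Z_step; eauto).
    assert (Z0 : Z k g0 z) by (apply Z_mono; auto).
    apply (Z_ext _ (fun t => 1 * (es al be c t * g1 t) + 1 * ((- al * es al be c t - be * ec al be c t) * g0 t))).
    intros; unfold Vf; ring.
    apply Z_lin; apply Z_mul; auto. apply Sm_es.
    apply (SmK_ext _ (fun t => (-al) * es al be c t + (-be) * ec al be c t)). intros; ring.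
    apply SmK_lin. apply Sm_es. apply Sm_ec.
  - intros x y Hax Hxy Hyb Hx Hy.
    set (q := fun t => exp ((-al) * t) * g0 t / sin (be * t + c)).
    destruct (rolle q (fun t => Vf al be c g0 g1 t / (sin (be * t + c))²) x y Hxy) as [t [Ht Hq]].
    + intros t Ht. unfold q. assert (0 < sin (be * t + c)) by (apply Hsin; lra).
      eapply dl_eq; [apply dl_div; [apply dl_mult; [apply dl_exp_lin|apply Hd0] | apply dl_sin_lin | cbv beta; lra] |].
      unfold Vf, es, ec. cbv beta. unfold Rsqr. field. lra.
    + unfold q; rewrite Hx, Hy; unfold Rdiv; ring.
    + exists t; split; auto. assert (0 < sin (be * t + c)) by (apply Hsin; lra).
      unfold Rdiv in Hq. apply Rmult_integral in Hq; destruct Hq as [Hq|Hq]; auto.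
      exfalso; apply Rinv_neq_0_compat in Hq; auto. unfold Rsqr; nra.
  - exists l1; auto.
Qed.

Lemma pair_step2 (al be c a b : R) (g0 g1 g2 L : R -> R) (Hd0 : deriv g0 g1) (Hd1 : deriv g1 g2) (HL : forall x, L x = g2 x - 2 * al * g1 x + (al * al + be * be) * g0 x) (Hsin : forall x, a <= x <= b -> 0 < sin (be * x + c)) l1 : Sm L -> (exists L', deriv L L') -> Srt l1 -> Good a b (Vf al be c g0 g1) l1 ->
  exists l2, Srt l2 /\ Good a b L l2 /\ (sumk l1 <= sumk l2 + 1)%nat.
Proof.
  intros SL HL' Hs Hg. destruct (abs_rolle a b (Vf al be c g0 g1) L) with (l := l1) as [l2 [S2 [G2 [Sum2 _]]]]; auto.
  - intros z k Hz Hk Hzk. destruct k as [|k]; [lia|]. simpl. rewrite Nat.sub_0_r.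
    apply (Z_cancel k (es al be c)). apply Sm_es. assert (0 < es al be c z) by (apply (es_pos al be c a b Hsin); auto). lra.
    apply SL. eapply Z_step. apply (d_Vf al be c g0 g1 g2 L Hd0 Hd1 HL). auto.
  - intros x y Hax Hxy Hyb Hx Hy.
    destruct (rolle _ _ x y Hxy (fun t _ => d_Vf al be c g0 g1 g2 L Hd0 Hd1 HL t)) as [t [Ht Hq]]. rewrite Hx, Hy; auto.
    exists t; split; auto. assert (0 < es al be c t) by (apply (es_pos al be c a b Hsin); lra).
    apply Rmult_integral in Hq; destruct Hq; auto; lra.
  - exists l2; auto.
Qed.

Lemma pair_kernel (al be c a b : R) (g0 g1 g2 L : R -> R) (Hd0 : deriv g0 g1) (Hd1 : deriv g1 g2) (HL : forall x, L x = g2 x - 2 * al * g1 x + (al * al + be * be) * g0 x) (Hsin : forall x, a <= x <= b -> 0 < sin (be * x + c)) z0 z1 : be <> 0 -> (forall x, L x = 0) -> a <= z0 <= b -> g0 z0 = 0 ->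
  Vf al be c g0 g1 z1 = 0 -> forall x, g0 x = 0.
Proof.
  intros Hbe HL0 Hz0 Hg0 HV1 x.
  assert (CV : forall y, Vf al be c g0 g1 y = 0).
  { intros y. rewrite <- HV1. apply (const_of_deriv0 _ _ (d_Vf al be c g0 g1 g2 L Hd0 Hd1 HL)). intros t; rewrite HL0; ring. }
  assert (Hg1 : g1 z0 = 0).
  { assert (Hm : es al be c z0 * g1 z0 = 0).
    { rewrite <- (CV z0). unfold Vf. rewrite Hg0. ring. }
    assert (0 < es al be c z0) by (apply (es_pos al be c a b Hsin); auto).
    apply Rmult_integral in Hm; destruct Hm; auto; lra. }
  assert (CV2 : forall y, V2f al be c g0 g1 y = 0).
  { intros y. replace 0 with (V2f al be c g0 g1 z0). apply (const_of_deriv0 _ _ (d_V2f al be c g0 g1 g2 L Hd0 Hd1 HL)). intros t; rewrite HL0; ring.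
    unfold V2f; rewrite Hg0, Hg1; ring. }
  assert (E : ec al be c x * Vf al be c g0 g1 x - es al be c x * V2f al be c g0 g1 x =
              - be * (exp (- al * x))^2 * ((sin (be * x + c))² + (cos (be * x + c))²) * g0 x).
  { unfold Vf, V2f, es, ec, Rsqr; ring. }
  rewrite CV, CV2, sin2_cos2 in E.
  assert (0 < exp (- al * x)) by apply exp_pos.
  assert (Hp : 0 < (exp (- al * x))^2) by (apply pow_lt; auto).
  assert (Hm : (be * (exp (- al * x))^2) * g0 x = 0) by nra.
  apply Rmult_integral in Hm; destruct Hm as [Hm|Hm]; auto.
  apply Rmult_integral in Hm; destruct Hm; lra.
Qed.

Definition hs (H : nat -> R -> Cpx) (j : nat) : R -> R := fun x => fst (H j x).
Lemma hs_deriv H j : Seq H -> deriv (hs H j) (hs H (S j)).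
Proof. intros HS x; destruct (HS j x); auto. Qed.
Lemma hs_Sm H j : Seq H -> Sm (hs H j).
Proof. intros HS. replace (hs H j) with (hs H (j + 0)%nat) by (f_equal; lia). apply (Sm_of_seq (fun i => hs H (j + i))). intros i. cbv beta. rewrite Nat.add_succ_r. apply hs_deriv; auto. Qed.

Lemma real_step a b r g0 g1 zs : deriv g0 g1 -> (exists g2, deriv g1 g2) -> Srt zs -> Good a b g0 zs ->
  exists l1, Srt l1 /\ Good a b (fun x => g1 x - r * g0 x) l1 /\ (sumk zs <= sumk l1 + 1)%nat.
Proof.
  intros Hd0 [g2 Hd1] Hs Hg. destruct (abs_rolle a b g0 (fun x => g1 x - r * g0 x)) with (l := zs) as [l1 [S1 [G1 [Sum1 _]]]]; auto.
  - exists (fun x => g2 x - r * g1 x). intros x; apply dl_minus; auto. apply dl_scal; auto.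
  - intros z k Hz Hk Hzk. destruct k as [|k]; [lia|]. simpl. rewrite Nat.sub_0_r.
    assert (Z1 : Z k g1 z) by (eapply Z_step; eauto).
    assert (Z0 : Z k g0 z) by (apply Z_mono; auto).
    apply (Z_ext _ (fun t => 1 * g1 t + (-r) * g0 t)). intros; ring. apply Z_lin; auto.
  - intros x y Hax Hxy Hyb Hx Hy.
    destruct (rolle (fun t => exp ((-r) * t) * g0 t) (fun t => exp ((-r) * t) * (g1 t - r * g0 t)) x y Hxy) as [t [Ht Hq]].
    + intros t _. eapply dl_eq. apply dl_mult. apply dl_exp_lin. apply Hd0. cbv beta; ring.
    + cbv beta; rewrite Hx, Hy; ring.
    + exists t; split; auto. assert (0 < exp ((-r) * t)) by apply exp_pos.
      apply Rmult_integral in Hq; destruct Hq; auto; lra.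
  - exists l1; auto.
Qed.

Lemma real_kernel r g0 g1 z : deriv g0 g1 -> (forall x, g1 x - r * g0 x = 0) -> g0 z = 0 -> forall x, g0 x = 0.
Proof.
  intros Hd HK Hz x.
  assert (C : forall y, exp ((-r) * y) * g0 y = exp ((-r) * z) * g0 z).
  { intros y. apply (const_of_deriv0 (fun t => exp ((-r) * t) * g0 t) (fun t => exp ((-r) * t) * (g1 t - r * g0 t))).
    intros t. eapply dl_eq. apply dl_mult. apply dl_exp_lin. apply Hd. cbv beta; ring.
    intros t; rewrite HK; ring. }
  specialize (C x). rewrite Hz, Rmult_0_r in C. assert (0 < exp ((-r) * x)) by apply exp_pos.
  apply Rmult_integral in C; destruct C; auto; lra.
Qed.

Lemma Good_nonempty a b h zs : Good a b h zs -> (1 <= sumk zs)%nat -> exists z, a <= z <= b /\ h z = 0.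
Proof.
  destruct zs as [|[z k] zs]; intros Hg Hs. simpl in Hs; lia.
  destruct (Hg (z,k) (or_introl eq_refl)) as [Hz [Hk Hzk]]; simpl in *.
  exists z; split; auto. destruct k; [lia|]. destruct Hzk; auto.
Qed.

Lemma Good_ext a b f g l : (forall x, f x = g x) -> Good a b f l -> Good a b g l.
Proof. intros E; replace g with f; auto; extensionality x; auto. Qed.

Lemma core a b : forall N l, (length l <= N)%nat -> Cl l -> (forall mu, In mu l -> Bnd a b mu) ->
  forall H, Seq H -> (forall j x, snd (H j x) = 0) -> (forall x, Comp l H O x = C0) ->
  forall zs, Srt zs -> Good a b (hs H O) zs -> (length l <= sumk zs)%nat -> forall x, hs H O x = 0.
Proof.
  induction N as [|N IH]; intros l Hlen HCl HB H HS HR HK zs Hs Hg Hsum x.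
  - destruct l; simpl in Hlen; [|lia]. specialize (HK x). unfold hs; change (Comp nil H 0 x) with (H 0%nat x) in HK; rewrite HK; auto.
  - destruct l as [|mu l1].
    { specialize (HK x). unfold hs; change (Comp nil H 0 x) with (H 0%nat x) in HK; rewrite HK; auto. }
    simpl in Hlen, Hsum.
    destruct (Req_EM_T (snd mu) 0) as [Hm|Hm].
    +
      set (K := A mu H).
      assert (HSK : Seq K) by (apply Seq_A; auto).
      assert (HRK : forall j x, snd (K j x) = 0).
      { intros j y; unfold K, A, Csub, Cmul; simpl. rewrite !HR, Hm; ring. }
      assert (HK0 : forall y, hs K 0 y = hs H 1 y - fst mu * hs H 0 y).
      { intros y; unfold hs, K, A, Csub, Cmul; simpl. rewrite !HR; ring. }
      destruct (real_step a b (fst mu) (hs H 0) (hs H 1) zs) as [l1z [S1 [G1 Sum1]]]; auto.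
      apply hs_deriv; auto. exists (hs H 2); apply hs_deriv; auto.
      assert (Z0 : forall y, hs K 0 y = 0).
      { intros y. apply (IH l1 ltac:(lia)) with (zs := l1z) (H := K); auto.
        - apply (Cl_tail1 mu); auto. destruct mu; unfold Cconj; simpl in *; rewrite Hm; f_equal; ring.
        - intros; apply HB; simpl; auto.
        - eapply Good_ext; [|exact G1]. intros; rewrite HK0; auto.
        - lia. }
      destruct (Good_nonempty a b _ zs Hg ltac:(lia)) as [z [Hz Hz0]].
      apply (real_kernel (fst mu) (hs H 0) (hs H 1) z); auto. apply hs_deriv; auto.
      intros y; rewrite <- HK0; auto.
    + (* complex root, paired with its conjugate *)
      assert (Hb : (b - a) * Rabs (snd mu) < PI) by (destruct (HB mu); simpl; auto; contradiction).
      assert (Hneq : Cconj mu <> mu).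
      { destruct mu; unfold Cconj; simpl in *; intros E; injection E; intros; lra. }
      assert (Hin : In (Cconj mu) l1).
      { apply (count_occ_In Ceq_dec). specialize (HCl mu). fold (cnt l1 (Cconj mu)).
        rewrite !cnt_cons in HCl. destruct (Ceq_dec mu mu); [|congruence].
        destruct (Ceq_dec mu (Cconj mu)); [congruence|]. lia. }
      destruct (in_split _ _ Hin) as [u [w Hl1]].
      set (l2 := u ++ w).
      assert (Hp : Permutation (mu :: l1) (mu :: Cconj mu :: l2)).
      { apply perm_skip. rewrite Hl1. unfold l2. apply Permutation_sym, Permutation_middle. }
      assert (Hlen2 : length l1 = S (length l2)).
      { rewrite Hl1; unfold l2; rewrite !length_app; simpl; lia. }
      set (K := A (Cconj mu) (A mu H)).
      assert (HSK : Seq K) by (apply Seq_A, Seq_A; auto).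
      assert (HRK : forall j x, snd (K j x) = 0).
      { intros j y; unfold K, A, Csub, Cmul, Cconj; simpl. rewrite !HR; ring. }
      set (al := fst mu). set (be := Rabs (snd mu)).
      assert (Hbe2 : be * be = snd mu * snd mu).
      { unfold be. rewrite <- Rabs_mult. apply Rabs_pos_eq. nra. }
      assert (Hbe : 0 < be) by (unfold be; apply Rabs_pos_lt; auto).
      assert (HK0 : forall y, hs K 0 y = hs H 2 y - 2 * al * hs H 1 y + (al * al + be * be) * hs H 0 y).
      { intros y; rewrite Hbe2; unfold hs, K, A, Csub, Cmul, Cconj, al; simpl. rewrite !HR; ring. }
      set (c := (PI - be * (a + b)) / 2).
      assert (Hsin : forall y, a <= y <= b -> 0 < sin (be * y + c)).
      { intros y Hy. fold be in Hb. assert (0 <= be * (y - a)) by (apply Rmult_le_pos; lra). assert (0 <= be * (b - y)) by (apply Rmult_le_pos; lra). apply sin_gt_0; unfold c; nra. }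
      destruct (pair_step1 al be c a b (hs H 0) (hs H 1) (hs H 2) (hs K 0)) with (zs := zs)
        as [l1z [S1 [G1 Sum1]]]; auto; try (apply hs_deriv; auto).
      destruct (pair_step2 al be c a b (hs H 0) (hs H 1) (hs H 2) (hs K 0)) with (l1 := l1z)
        as [l2z [S2 [G2 Sum2]]]; auto; try (apply hs_deriv; auto).
      apply hs_Sm; auto. exists (hs K 1); apply hs_deriv; auto.
      assert (Z0 : forall y, hs K 0 y = 0).
      { intros y. apply (IH l2 ltac:(lia)) with (zs := l2z) (H := K); auto.
        - apply (Cl_tail2 mu). apply (Cl_perm _ _ Hp); auto.
        - intros nu Hnu; apply HB. apply (Permutation_in _ (Permutation_sym Hp)). simpl; auto.
        - intros y'; rewrite <- (HK y'). rewrite (Comp_perm _ _ Hp). reflexivity.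
        - lia. }
      destruct (Good_nonempty a b _ zs Hg ltac:(lia)) as [z0 [Hz0 Hz00]].
      destruct (Good_nonempty a b _ l1z G1 ltac:(lia)) as [z1 [Hz1 Hz10]].
      apply (pair_kernel al be c a b (hs H 0) (hs H 1) (hs H 2) (hs K 0)) with (z0 := z0) (z1 := z1); auto;
        try (apply hs_deriv; auto); lra.
Qed.

Fixpoint ins (p : R * nat) (l : list (R * nat)) : list (R * nat) :=
  match l with
  | nil => p :: nil
  | q :: l' => if Rlt_dec (fst p) (fst q) then p :: q :: l' else q :: ins p l'
  end.
Fixpoint isort (l : list (R * nat)) : list (R * nat) :=
  match l with nil => nil | p :: l' => ins p (isort l') end.

Lemma ins_perm p l : Permutation (ins p l) (p :: l).
Proof.
  induction l as [|q l IH]; simpl; auto. destruct (Rlt_dec (fst p) (fst q)); auto.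
  eapply perm_trans. apply perm_skip, IH. apply perm_swap.
Qed.
Lemma isort_perm l : Permutation (isort l) l.
Proof. induction l; simpl; auto. eapply perm_trans. apply ins_perm. auto. Qed.

Lemma ins_srt p l : Srt l -> (forall q, In q l -> fst q <> fst p) -> Srt (ins p l).
Proof.
  induction l as [|q l IH]; simpl; intros Hs Hn.
  - split; auto. intros ? [].
  - destruct Hs as [Hs1 Hs2]. destruct (Rlt_dec (fst p) (fst q)) as [Hlt|Hge].
    + simpl. split; [|split; auto]. intros r [E|Hr]; [subst; auto|specialize (Hs1 r Hr); lra].
    + simpl. split.
      * intros r Hr. apply (Permutation_in _ (ins_perm p l)) in Hr. destruct Hr as [E|Hr].
        subst r. assert (fst q <> fst p) by (apply Hn; auto). lra. apply Hs1; auto.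
      * apply IH; auto.
Qed.
Lemma isort_srt l : NoDup (map fst l) -> Srt (isort l).
Proof.
  induction l as [|p l IH]; simpl; intros Hnd; auto. inversion Hnd; subst.
  apply ins_srt; auto. intros q Hq E. apply H1. rewrite <- E. apply in_map.
  exact (Permutation_in _ (isort_perm l) Hq).
Qed.
Lemma sumk_perm l l' : Permutation l l' -> sumk l = sumk l'.
Proof. induction 1; rewrite ?sumk_cons; auto; try lia. Qed.

Lemma lst_length lam k : length (lst lam k) = k.
Proof. induction k; simpl; auto. Qed.
Lemma lst_in lam k mu : In mu (lst lam k) -> exists j, (j < k)%nat /\ mu = lam j.
Proof.
  induction k; simpl; intros H; [contradiction|]. destruct H as [<-|H].
  exists k; split; auto. destruct (IHk H) as [j [Hj ->]]; exists j; split; auto.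
Qed.
Lemma maxim_ge lam n j : (j <= n)%nat -> Rabs (Im (lam j)) <= MaxAbsIm lam n.
Proof.
  induction n; intros Hj; simpl.
  - replace j with 0%nat by lia; lra.
  - destruct (Nat.eq_dec j (S n)) as [->|Hne].
    + apply Rmax_r.
    + eapply Rle_trans; [apply IHn; lia|apply Rmax_l].
Qed.

Lemma Seq_Lin c1 D1 c2 D2 : Seq D1 -> Seq D2 -> Seq (Lin c1 D1 c2 D2).
Proof. intros H1 H2 k; unfold Lin. apply IsDeriv_add; apply IsDeriv_cmul; auto. Qed.

Theorem mainTheorem6 (lam : nat -> Cpx) (n : nat) :
  ConjClosed lam n ->
  forall a b : R, a < b ->
    (MaxAbsIm lam n = 0 \/ b - a < PI / MaxAbsIm lam n) ->
    ExtChebyshevOn lam n a b.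
Proof.
  intros HC a b Hab HM f [[D HD] Hop] [x0 Hx0] zs Hnd Hzs.
  set (L := lst lam (S n)).
  assert (HCl : Cl L).
  { intros nu. apply Nat.le_antisymm. apply conj_count; auto.
    rewrite <- (Cconj_inv nu) at 2. apply conj_count; auto. }
  assert (HB : forall mu, In mu L -> Bnd a b mu).
  { intros mu Hmu. destruct (lst_in lam (S n) mu Hmu) as [j [Hj ->]].
    assert (Hle := maxim_ge lam n j ltac:(lia)). unfold Im in Hle. unfold Bnd.
    set (M := MaxAbsIm lam n) in *.
    assert (H0 := Rabs_pos (snd (lam j))).
    destruct (Req_EM_T M 0) as [E|E].
    - left. rewrite E in Hle. destruct (Req_EM_T (snd (lam j)) 0) as [Z|Z]; auto. apply Rabs_no_R0 in Z. lra.
    - destruct HM as [HM|HM]; [contradiction|]. right.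
      assert (HMp : 0 < M) by lra.
      assert (Hba : (b - a) * M < PI).
      { apply (Rmult_lt_compat_r M) in HM; auto. unfold Rdiv in HM. rewrite Rmult_assoc, Rinv_l in HM; lra. }
      assert ((b - a) * Rabs (snd (lam j)) <= (b - a) * M) by (apply Rmult_le_compat_l; lra). lra. }
  assert (KD : forall x, Comp L D O x = C0) by (apply (opker_to lam (S n) f D); auto).
  set (Db := fun j x => Cconj (D j x)).
  assert (HDb : IsDerivSeq (fun x => Cconj (f x)) Db).
  { destruct HD as [H0 H1]; split. intros x; unfold Db; rewrite H0; auto.
    intros k; apply IsDeriv_conj, H1. }
  assert (KDb : forall x, Comp L Db O x = C0).
  { destruct (HC f (conj (ex_intro _ D HD) Hop)) as [_ Hop']. apply (opker_to lam (S n) (fun x => Cconj (f x)) Db); auto. }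
  destruct HD as [HD0 HDs].
  assert (SD : Seq D) by exact HDs.
  assert (SDb : Seq Db) by exact (proj2 HDb).
  set (HRe := Lin (1/2, 0) D (1/2, 0) Db).
  set (HIm := Lin (0, -1/2) D (0, 1/2) Db).
  assert (ERe : forall j x, HRe j x = (fst (D j x), 0)).
  { intros; unfold HRe, Lin, Db, Cconj, Cmul, Cadd; apply Cpx_eq; simpl; field. }
  assert (EIm : forall j x, HIm j x = (snd (D j x), 0)).
  { intros; unfold HIm, Lin, Db, Cconj, Cmul, Cadd; apply Cpx_eq; simpl; field. }
  assert (KRe : forall x, Comp L HRe O x = C0).
  { intros x; unfold HRe; rewrite Comp_Lin; unfold Lin; rewrite KD, KDb; unfold C0; cring. }
  assert (KIm : forall x, Comp L HIm O x = C0).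
  { intros x; unfold HIm; rewrite Comp_Lin; unfold Lin; rewrite KD, KDb; unfold C0; cring. }
  assert (SRe : Seq HRe) by (apply Seq_Lin; auto).
  assert (SIm : Seq HIm) by (apply Seq_Lin; auto).
  set (zs' := isort zs).
  assert (Hs : Srt zs') by (apply isort_srt; auto).
  assert (Hsum : sumk zs' = sumk zs) by (apply sumk_perm, isort_perm).
  assert (HZ : forall p, In p zs' -> a <= fst p <= b /\ (1 <= snd p)%nat /\
                 forall j, (j < snd p)%nat -> D j (fst p) = C0).
  { intros p Hp. apply (Permutation_in _ (isort_perm zs)) in Hp.
    destruct (Hzs p Hp) as [Hab' [Hk [D' [HD' [Hz _]]]]]. repeat split; try lra; auto.
    rewrite (seq_unique f D D'); auto. split; auto. }
  assert (GRe : Good a b (hs HRe O) zs').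
  { intros p Hp. destruct (HZ p Hp) as [H1 [H2 H3]]. split; auto. split; auto.
    apply Z_of_seq. intros j; apply hs_deriv; auto.
    intros j Hj; unfold hs; rewrite ERe, H3; auto. }
  assert (GIm : Good a b (hs HIm O) zs').
  { intros p Hp. destruct (HZ p Hp) as [H1 [H2 H3]]. split; auto. split; auto.
    apply Z_of_seq. intros j; apply hs_deriv; auto.
    intros j Hj; unfold hs; rewrite EIm, H3; auto. }
  unfold sumk in Hsum. rewrite <- Hsum.
  destruct (Nat.le_gt_cases (sumk zs') n) as [Hle|Hgt]; [exact Hle|].
  exfalso. apply Hx0.
  assert (Hlen : (length L <= sumk zs')%nat) by (unfold L; rewrite lst_length; lia).
  assert (R0 := core a b (length L) L (le_n _) HCl HB HRe SRe ltac:(intros; rewrite ERe; auto) KRe zs' Hs GRe Hlen x0).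
  assert (I0 := core a b (length L) L (le_n _) HCl HB HIm SIm ltac:(intros; rewrite EIm; auto) KIm zs' Hs GIm Hlen x0).
  unfold hs in R0, I0. rewrite ERe in R0; rewrite EIm in I0. simpl in R0, I0.
  rewrite <- HD0. apply Cpx_eq; auto.
Qed.
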